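(* For every $n\ge2$ we have $L_n\subseteq C_n$.
   Context: $C_n$ is the set of all numbers $f$ such that there exist $n$ distinct circles in the Euclidean plane, not in general position, with every two of the circles having at least one common point, whose union has complement in the plane consisting of exactly $f$ connected components. $L_n$ is the set of all numbers of connected components of the complement in the plane of the union of $n$ distinct lines not in general position (no further condition on intersections). Circles are in general position if no two are tangent and no three pass through a common point; lines are in general position if no two are parallel and no three pass through a common point. *)

(* Defs.v *)
From Stdlib Require Import Reals.
Open Scope R_scope.

Definition point := (R * R)%type.

Definition dist2 (p q : point) : R :=
  (fst p - fst q) ^ 2 + (snd p - snd q) ^ 2.

Definition is_open (U : point -> Prop) : Prop :=
  forall p, U p -> exists eps, 0 < eps /\ forall q, dist2 p q < eps ^ 2 -> U q.

Definition connected (A : point -> Prop) : Prop :=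
  ~ exists U V : point -> Prop,
      is_open U /\ is_open V /\
      (forall p, A p -> U p \/ V p) /\
      (exists p, A p /\ U p) /\ (exists p, A p /\ V p) /\
      (forall p, A p -> U p -> V p -> False).

Definition same_component (S : point -> Prop) (x y : point) : Prop :=
  exists A : point -> Prop,
    (forall p, A p -> S p) /\ connected A /\ A x /\ A y.

Definition num_components (S : point -> Prop) (f : nat) : Prop :=
  exists rep : nat -> point,
    (forall i, (i < f)%nat -> S (rep i)) /\
    (forall i j, (i < f)%nat -> (j < f)%nat -> i <> j ->
        ~ same_component S (rep i) (rep j)) /\
    (forall p, S p -> exists i, (i < f)%nat /\ same_component S p (rep i)).

(* a circle: ((center_x, center_y), radius) with radius > 0 *)
Definition circle := (point * R)%type.
Definition on_circle (c : circle) (p : point) : Prop := dist2 p (fst c) = (snd c) ^ 2.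

Definition tangent_circles (c d : circle) : Prop :=
  exists p, on_circle c p /\ on_circle d p /\
    forall q, on_circle c q -> on_circle d q -> q = p.

Definition circles_general_position (n : nat) (C : nat -> circle) : Prop :=
  (forall i j, (i < n)%nat -> (j < n)%nat -> i <> j -> ~ tangent_circles (C i) (C j)) /\
  (forall i j k, (i < n)%nat -> (j < n)%nat -> (k < n)%nat ->
      i <> j -> j <> k -> i <> k ->
      ~ exists p, on_circle (C i) p /\ on_circle (C j) p /\ on_circle (C k) p).

Definition C_set (n f : nat) : Prop :=
  exists C : nat -> circle,
    (forall i, (i < n)%nat -> 0 < snd (C i)) /\
    (forall i j, (i < n)%nat -> (j < n)%nat -> i <> j -> C i <> C j) /\
    ~ circles_general_position n C /\
    (forall i j, (i < n)%nat -> (j < n)%nat ->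
        exists p, on_circle (C i) p /\ on_circle (C j) p) /\
    num_components
      (fun p => ~ exists i, (i < n)%nat /\ on_circle (C i) p) f.

(* a line {(x,y) | a x + b y = c} given by (a, b, c) with (a,b) <> (0,0) *)
Definition line := (R * R * R)%type.
Definition on_line (l : line) (p : point) : Prop :=
  let '(a, b, c) := l in a * fst p + b * snd p = c.
Definition valid_line (l : line) : Prop :=
  let '(a, b, _) := l in ~ (a = 0 /\ b = 0).
Definition same_line (l m : line) : Prop := forall p, on_line l p <-> on_line m p.

Definition parallel_lines (l m : line) : Prop :=
  ~ same_line l m /\ ~ exists p, on_line l p /\ on_line m p.

Definition lines_general_position (n : nat) (L : nat -> line) : Prop :=
  (forall i j, (i < n)%nat -> (j < n)%nat -> i <> j -> ~ parallel_lines (L i) (L j)) /\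
  (forall i j k, (i < n)%nat -> (j < n)%nat -> (k < n)%nat ->
      i <> j -> j <> k -> i <> k ->
      ~ exists p, on_line (L i) p /\ on_line (L j) p /\ on_line (L k) p).

Definition L_set (n f : nat) : Prop :=
  exists L : nat -> line,
    (forall i, (i < n)%nat -> valid_line (L i)) /\
    (forall i j, (i < n)%nat -> (j < n)%nat -> i <> j -> ~ same_line (L i) (L j)) /\
    ~ lines_general_position n L /\
    num_components
      (fun p => ~ exists i, (i < n)%nat /\ on_line (L i) p) f.

(* Main.v *)
Require Import Defs.
From Stdlib Require Import Reals Lra Lia Psatz Classical.
Open Scope R_scope.

Definition cont2 (F : point -> R) : Prop :=
  forall p e, 0 < e -> exists d, 0 < d /\ forall q, dist2 p q < d^2 -> Rabs (F q - F p) < e.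

Lemma sq_lt_abs : forall x y d, 0 < d -> x^2 + y^2 < d^2 -> Rabs x < d.
Proof. intros x y d Hd H. destruct (Rcase_abs x); [rewrite Rabs_left|rewrite Rabs_right]; nra. Qed.

Lemma abs_lt_sq : forall x d, Rabs x < d -> x^2 < d^2.
Proof. intros x d H. destruct (Rcase_abs x); [rewrite Rabs_left in H|rewrite Rabs_right in H]; nra. Qed.

Lemma cont2_fst : cont2 fst.
Proof. intros [p1 p2] e He. exists e. split; auto. intros [q1 q2] H. unfold dist2 in H; simpl in *.
  rewrite Rabs_minus_sym. apply sq_lt_abs with (p2-q2); auto. Qed.

Lemma cont2_snd : cont2 snd.
Proof. intros [p1 p2] e He. exists e. split; auto. intros [q1 q2] H. unfold dist2 in H; simpl in *.
  rewrite Rabs_minus_sym. apply sq_lt_abs with (p1-q1); auto; lra. Qed.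

Lemma cont2_const : forall c, cont2 (fun _ => c).
Proof. intros c p e He. exists 1. split. lra. intros. rewrite Rminus_eq_0, Rabs_R0. auto. Qed.

Lemma cont2_ext : forall F G, (forall p, F p = G p) -> cont2 F -> cont2 G.
Proof. intros F G E H p e He. destruct (H p e He) as [d [Hd H']]. exists d; split; auto.
  intros q Hq. rewrite <- !E. auto. Qed.

Lemma min_sq : forall d1 d2 x, 0 < d1 -> 0 < d2 -> x < (Rmin d1 d2)^2 -> x < d1^2 /\ x < d2^2.
Proof. intros d1 d2 x H1 H2 H. pose proof (Rmin_l d1 d2). pose proof (Rmin_r d1 d2).
  assert (0 < Rmin d1 d2) by (apply Rmin_glb_lt; auto). split; nra. Qed.

Lemma cont2_plus : forall F G, cont2 F -> cont2 G -> cont2 (fun p => F p + G p).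
Proof. intros F G HF HG p e He.
  destruct (HF p (e/2)) as [d1 [Hd1 H1]]. lra.
  destruct (HG p (e/2)) as [d2 [Hd2 H2]]. lra.
  exists (Rmin d1 d2). split. apply Rmin_glb_lt; auto.
  intros q Hq. destruct (min_sq d1 d2 _ Hd1 Hd2 Hq) as [Q1 Q2].
  specialize (H1 q Q1). specialize (H2 q Q2).
  replace (F q + G q - (F p + G p)) with ((F q - F p) + (G q - G p)) by ring.
  eapply Rle_lt_trans. apply Rabs_triang. lra. Qed.

Lemma cont2_mult : forall F G, cont2 F -> cont2 G -> cont2 (fun p => F p * G p).
Proof. intros F G HF HG p e He.
  set (a := Rabs (F p)). set (b := Rabs (G p)).
  assert (Ha : 0 <= a) by apply Rabs_pos. assert (Hb : 0 <= b) by apply Rabs_pos.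
  destruct (HF p (Rmin 1 (e/(2*(b+1))))) as [d1 [Hd1 H1]].
  { apply Rmin_glb_lt. lra. apply Rdiv_lt_0_compat; lra. }
  destruct (HG p (e/(2*(a+1)))) as [d2 [Hd2 H2]]. apply Rdiv_lt_0_compat; lra.
  exists (Rmin d1 d2). split. apply Rmin_glb_lt; auto.
  intros q Hq. destruct (min_sq d1 d2 _ Hd1 Hd2 Hq) as [Q1 Q2].
  specialize (H1 q Q1). specialize (H2 q Q2).
  pose proof (Rmin_l 1 (e/(2*(b+1)))). pose proof (Rmin_r 1 (e/(2*(b+1)))).
  assert (HFq : Rabs (F q) <= a + 1).
  { replace (F q) with (F p + (F q - F p)) by ring. eapply Rle_trans. apply Rabs_triang. unfold a; lra. }
  replace (F q * G q - F p * G p) with (F q * (G q - G p) + G p * (F q - F p)) by ring.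
  eapply Rle_lt_trans. apply Rabs_triang. rewrite !Rabs_mult.
  assert (E1 : Rabs (F q) * Rabs (G q - G p) < e/2).
  { apply Rle_lt_trans with ((a+1) * Rabs (G q - G p)).
    apply Rmult_le_compat_r. apply Rabs_pos. auto.
    replace (e/2) with ((a+1) * (e/(2*(a+1)))) by (field; lra).
    apply Rmult_lt_compat_l; lra. }
  assert (E2 : Rabs (G p) * Rabs (F q - F p) <= e/2).
  { fold b. apply Rle_trans with (b * (e/(2*(b+1)))).
    apply Rmult_le_compat_l; lra.
    replace (e/2) with ((b+1) * (e/(2*(b+1)))) by (field; lra).
    apply Rmult_le_compat_r. left; apply Rdiv_lt_0_compat; lra. lra. }
  lra. Qed.

Lemma open_pos : forall F, cont2 F -> is_open (fun p => 0 < F p).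
Proof. intros F HF p Hp. destruct (HF p (F p) Hp) as [d [Hd H]]. exists d. split; auto.
  intros q Hq. apply H in Hq. apply Rabs_def2 in Hq. lra. Qed.

Lemma open_neg : forall F, cont2 F -> is_open (fun p => F p < 0).
Proof. intros F HF p Hp. destruct (HF p (- F p)) as [d [Hd H]]. lra. exists d. split; auto.
  intros q Hq. apply H in Hq. apply Rabs_def2 in Hq. lra. Qed.

Lemma sep_gen : forall (S : point -> Prop) F x y, cont2 F -> (forall p, S p -> F p <> 0) ->
  same_component S x y -> 0 < F x * F y.
Proof. intros S F x y HF HS [A [HAS [HA [Ax Ay]]]].
  destruct (Rlt_le_dec 0 (F x * F y)) as [h|h]; auto. exfalso.
  assert (Fx : F x <> 0) by auto. assert (Fy : F y <> 0) by auto.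
  apply HA. destruct (Rlt_or_le 0 (F x)).
  - exists (fun p => 0 < F p), (fun p => F p < 0).
    split. apply open_pos; auto. split. apply open_neg; auto. split.
    intros p Ap. assert (F p <> 0) by auto. destruct (Rtotal_order 0 (F p)) as [H1|[H1|H1]]; auto; exfalso; auto.
    split. exists x; split; auto. split. exists y; split; auto.
    destruct (Rtotal_order 0 (F y)) as [H1|[H1|H1]]; [nra| exfalso; auto | exact H1].
    intros; lra.
  - exists (fun p => F p < 0), (fun p => 0 < F p).
    split. apply open_neg; auto. split. apply open_pos; auto. split.
    intros p Ap. assert (F p <> 0) by auto. destruct (Rtotal_order 0 (F p)) as [H1|[H1|H1]]; auto; exfalso; auto.
    split. exists x; split; auto. lra. split. exists y; split; auto.
    destruct (Rtotal_order 0 (F y)) as [H1|[H1|H1]]; [exact H1| exfalso; auto | nra].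
    intros; lra.
Qed.

Lemma conn_aux : forall A U V b, connected A -> A b -> U b -> is_open U -> is_open V ->
  (forall p, A p -> U p \/ V p) -> (forall p, A p -> U p -> V p -> False) ->
  forall p, A p -> ~ V p.
Proof. intros A U V b HA Ab Ub oU oV cov dis p Ap Vp. apply HA.
  exists U, V. split; auto. split; auto. split; auto. split. exists b; auto. split. exists p; auto. auto. Qed.

Lemma same_comp_trans : forall S a b c, same_component S a b -> same_component S b c ->
  same_component S a c.
Proof. intros S a b c [A [HAS [HA [Aa Ab]]]] [B [HBS [HB [Bb Bc]]]].
  exists (fun p => A p \/ B p). split; [|split; [|split]].
  - intros p [|]; auto.
  - intros [U [V [oU [oV [cov [[p1 [P1 U1]] [[p2 [P2 V2]] dis]]]]]]].
    destruct (cov b (or_introl Ab)) as [Ub|Vb].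
    + assert (nA := conn_aux A U V b HA Ab Ub oU oV (fun p h => cov p (or_introl h)) (fun p h => dis p (or_introl h))).
      assert (nB := conn_aux B U V b HB Bb Ub oU oV (fun p h => cov p (or_intror h)) (fun p h => dis p (or_intror h))).
      destruct P2 as [P2|P2]; [apply (nA p2)|apply (nB p2)]; auto.
    + assert (nA := conn_aux A V U b HA Ab Vb oV oU (fun p h => proj1 (or_comm _ _) (cov p (or_introl h))) (fun p h u v => dis p (or_introl h) v u)).
      assert (nB := conn_aux B V U b HB Bb Vb oV oU (fun p h => proj1 (or_comm _ _) (cov p (or_intror h))) (fun p h u v => dis p (or_intror h) v u)).
      destruct P1 as [P1|P1]; [apply (nA p1)|apply (nB p1)]; auto.
  - left; auto.
  - right; auto.
Qed.


Lemma cpt_eps : forall f t, continuity_pt f t -> forall e, 0 < e ->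
  exists d, 0 < d /\ forall u, Rabs (u - t) < d -> Rabs (f u - f t) < e.
Proof. intros f t H e He. unfold continuity_pt, continue_in, limit1_in, limit_in in H.
  destruct (H e He) as [a [Ha Hf]]. exists a. split; auto. intros u Hu.
  destruct (Req_dec u t) as [->|Hne]. rewrite Rminus_diag, Rabs_R0. auto.
  apply (Hf u). split. split. exact I. auto. simpl. unfold Rdist. auto. Qed.

Definition pcont (g : R -> point) : Prop :=
  forall t, 0 <= t <= 1 -> forall e, 0 < e -> exists d, 0 < d /\
    forall u, 0 <= u <= 1 -> Rabs (u - t) < d -> dist2 (g t) (g u) < e^2.

Lemma abs_lt_sq' : forall x d, Rabs x < d -> x^2 < d^2.
Proof. intros x d H. destruct (Rcase_abs x); [rewrite Rabs_left in H|rewrite Rabs_right in H]; nra. Qed.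

Lemma pcont_of : forall g1 g2 : R -> R,
  (forall t, 0 <= t <= 1 -> continuity_pt g1 t) ->
  (forall t, 0 <= t <= 1 -> continuity_pt g2 t) ->
  pcont (fun t => (g1 t, g2 t)).
Proof. intros g1 g2 H1 H2 t Ht e He.
  destruct (cpt_eps g1 t (H1 t Ht) (e/2)) as [d1 [Hd1 E1]]. lra.
  destruct (cpt_eps g2 t (H2 t Ht) (e/2)) as [d2 [Hd2 E2]]. lra.
  exists (Rmin d1 d2). split. apply Rmin_glb_lt; auto.
  intros u Hu Hut. pose proof (Rmin_l d1 d2). pose proof (Rmin_r d1 d2).
  assert (A1 := abs_lt_sq' _ _ (E1 u ltac:(lra))).
  assert (A2 := abs_lt_sq' _ _ (E2 u ltac:(lra))).
  unfold dist2; simpl.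
  replace ((g1 t - g1 u)^2) with ((g1 u - g1 t)^2) by ring.
  replace ((g2 t - g2 u)^2) with ((g2 u - g2 t)^2) by ring. nra. Qed.

Lemma path_sep : forall g U V, pcont g -> is_open U -> is_open V ->
  forall a b, 0 <= a -> a <= b -> b <= 1 -> U (g a) -> V (g b) ->
  (forall t, a <= t <= b -> U (g t) \/ V (g t)) ->
  (forall t, a <= t <= b -> U (g t) -> V (g t) -> False) -> False.
Proof. intros g U V Hg oU oV a b Ha Hab Hb Ua Vb cov dis.
  set (E := fun t => a <= t <= b /\ U (g t)).
  destruct (completeness E) as [s [Hub Hlub]].
  { exists b. intros t [Ht _]. lra. }
  { exists a. split; auto. lra. }
  assert (Has : a <= s) by (apply Hub; split; auto; lra).
  assert (Hsb : s <= b) by (apply Hlub; intros t [Ht _]; lra).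
  destruct (cov s (conj Has Hsb)) as [Us|Vs].
  - destruct (oU _ Us) as [eps [Heps HU]].
    destruct (Hg s ltac:(lra) eps Heps) as [d [Hd Hc]].
    assert (Hsb' : s < b). { destruct Hsb; auto. subst s. exfalso. apply (dis b); auto; lra. }
    set (t := Rmin (s + d/2) b).
    assert (t1 : s < t) by (unfold t; apply Rmin_glb_lt; lra).
    assert (t2 : t <= b) by apply Rmin_r.
    assert (t3 : t <= s + d/2) by apply Rmin_l.
    assert (Et : E t). { split. lra. apply HU. apply Hc. lra. rewrite Rabs_right; lra. }
    specialize (Hub t Et). lra.
  - destruct (oV _ Vs) as [eps [Heps HV]].
    destruct (Hg s ltac:(lra) eps Heps) as [d [Hd Hc]].
    assert (Has' : a < s). { destruct Has; auto. subst s. exfalso. apply (dis a); auto; lra. }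
    set (t := Rmax (s - d/2) a).
    assert (t1 : t < s) by (unfold t; apply Rmax_lub_lt; lra).
    assert (t2 : a <= t) by apply Rmax_r.
    assert (t3 : s - d/2 <= t) by apply Rmax_l.
    assert (Hup : is_upper_bound E t).
    { intros u [Hu Uu]. destruct (Rle_dec u t) as [|Hn]; auto. exfalso.
      assert (u <= s) by (apply Hub; split; auto).
      apply (dis u); auto. apply HV. apply Hc. lra. rewrite Rabs_left1; lra. }
    specialize (Hlub t Hup). lra.
Qed.

Lemma connected_path : forall g1 g2 : R -> R,
  (forall t, 0 <= t <= 1 -> continuity_pt g1 t) ->
  (forall t, 0 <= t <= 1 -> continuity_pt g2 t) ->
  connected (fun p => exists t, 0 <= t <= 1 /\ p = (g1 t, g2 t)).
Proof. intros g1 g2 H1 H2 [U [V [oU [oV [cov [[p1 [[t1 [T1 ->]] U1]] [[p2 [[t2 [T2 ->]] V2]] dis]]]]]]].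
  assert (Hg := pcont_of g1 g2 H1 H2).
  destruct (Rle_dec t1 t2).
  - apply (path_sep _ U V Hg oU oV t1 t2); try lra; auto.
    intros t Ht. apply cov. exists t; split; auto; lra.
    intros t Ht. apply dis. exists t; split; auto; lra.
  - apply (path_sep _ V U Hg oV oU t2 t1); try lra; auto.
    intros t Ht. apply or_comm, cov. exists t; split; auto; lra.
    intros t Ht u v. apply (dis (g1 t, g2 t)); auto. exists t; split; auto; lra.
Qed.


Definition hl (l : line) (p : point) : R := let '(a, b, c) := l in a * fst p + b * snd p - c.

Lemma on_line_hl : forall l p, on_line l p <-> hl l p = 0.
Proof. intros [[a b] c] p; simpl; split; lra. Qed.

Lemma cont2_hl : forall l, cont2 (hl l).
Proof. intros [[a b] c].
  apply cont2_ext with (fun p => (fun _ => a) p * fst p + ((fun _ => b) p * snd p + (fun _ => -c) p)).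
  intros; simpl; ring.
  apply cont2_plus. apply cont2_mult. apply cont2_const. apply cont2_fst.
  apply cont2_plus. apply cont2_mult. apply cont2_const. apply cont2_snd. apply cont2_const. Qed.

Definition seg (x y : point) (t : R) : point :=
  (fst x + t * (fst y - fst x), snd x + t * (snd y - snd x)).

Lemma seg0 : forall x y, seg x y 0 = x.
Proof. intros [x1 x2] y. unfold seg; simpl. f_equal; ring. Qed.
Lemma seg1 : forall x y, seg x y 1 = y.
Proof. intros x [y1 y2]. unfold seg; simpl. f_equal; ring. Qed.

Lemma hl_seg : forall l x y t, hl l (seg x y t) = (1 - t) * hl l x + t * hl l y.
Proof. intros [[a b] c] x y t. unfold seg; simpl. ring. Qed.

Lemma sc_seg : forall l x y t, 0 < hl l x * hl l y -> 0 <= t <= 1 ->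
  0 < hl l x * hl l (seg x y t).
Proof. intros l x y t H Ht. rewrite hl_seg.
  set (X := hl l x) in *. set (Y := hl l y) in *.
  assert (0 < X * X) by (destruct (Rtotal_order X 0) as [h|[h|h]]; [nra| rewrite h in H; lra | nra]).
  replace (X * ((1 - t) * X + t * Y)) with ((1-t) * (X*X) + t * (X*Y)) by ring.
  destruct (Rle_lt_dec t 0); nra. Qed.

Definition SL (n : nat) (L : nat -> line) (p : point) : Prop :=
  ~ exists i, (i < n)%nat /\ on_line (L i) p.

Definition cell (n : nat) (L : nat -> line) (x y : point) : Prop :=
  forall k, (k < n)%nat -> 0 < hl (L k) x * hl (L k) y.

Lemma SL_cont_seg : forall g1 g2 : R -> R, forall t, continuity_pt g1 t -> True. Proof. auto. Qed.

Lemma SL_conn : forall n L x y, cell n L x y -> same_component (SL n L) x y.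
Proof. intros n L x y H.
  exists (fun p => exists t, 0 <= t <= 1 /\ p = ((fun t => fst (seg x y t)) t, (fun t => snd (seg x y t)) t)).
  split; [|split; [|split]].
  - intros p [t [Ht ->]] [i [Hi Hl]]. apply on_line_hl in Hl.
    cbv beta in Hl. rewrite <- surjective_pairing in Hl.
    specialize (sc_seg (L i) x y t (H i Hi) Ht). rewrite Hl. lra.
  - apply connected_path; intros t _; unfold seg; simpl; reg.
  - exists 0. split. lra. cbv beta. rewrite <- surjective_pairing, seg0. auto.
  - exists 1. split. lra. cbv beta. rewrite <- surjective_pairing, seg1. auto.
Qed.

Lemma SL_sep : forall n L x y, same_component (SL n L) x y -> cell n L x y.
Proof. intros n L x y H k Hk. apply (sep_gen (SL n L)); auto. apply cont2_hl.
  intros p Hp E. apply Hp. exists k. split; auto. apply on_line_hl; auto. Qed.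


Definition Nq (q : point) : R := fst q ^ 2 + snd q ^ 2.
Definition Psi (o p : point) : point :=
  ((fst p - fst o) / dist2 p o, (snd p - snd o) / dist2 p o).
Definition Phi (o q : point) : point :=
  (fst o + fst q / Nq q, snd o + snd q / Nq q).
Definition gl (o : point) (l : line) (q : point) : R :=
  let '(a, b, c) := l in hl l o * Nq q + a * fst q + b * snd q.
Definition circ (o : point) (l : line) : circle :=
  let '(a, b, c) := l in
  ((- a / (2 * hl l o), - b / (2 * hl l o)), sqrt (a ^ 2 + b ^ 2) / (2 * Rabs (hl l o))).

Lemma sq_pos : forall x, x <> 0 -> 0 < x ^ 2.
Proof. intros x H. assert (0 < Rsqr x) by (apply Rsqr_pos_lt; auto). unfold Rsqr in *. nra. Qed.

Lemma sum_sq_pos : forall x y, ~ (x = 0 /\ y = 0) -> 0 < x ^ 2 + y ^ 2.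
Proof. intros x y H. destruct (Req_dec x 0).
  - assert (y <> 0) by tauto. pose proof (sq_pos y H1). nra.
  - pose proof (sq_pos x H0). nra. Qed.

Lemma dist2_pos : forall p o, p <> o -> 0 < dist2 p o.
Proof. intros [p1 p2] [o1 o2] H. unfold dist2; simpl. apply sum_sq_pos.
  intros [h1 h2]. apply H. f_equal; lra. Qed.

Lemma Nq_pos : forall q, q <> (0,0) -> 0 < Nq q.
Proof. intros [q1 q2] H. unfold Nq; simpl. apply sum_sq_pos.
  intros [h1 h2]. apply H. subst; auto. Qed.

Lemma Nq_Psi : forall o p, p <> o -> Nq (Psi o p) = / dist2 p o.
Proof. intros o p H. pose proof (dist2_pos p o H). unfold Nq, Psi; simpl.
  unfold dist2 in *. field. lra. Qed.

Lemma Psi_nz : forall o p, p <> o -> Psi o p <> (0,0).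
Proof. intros o p H E. pose proof (Nq_Psi o p H). rewrite E in H0. unfold Nq in H0; simpl in H0.
  pose proof (dist2_pos p o H). assert (0 < / dist2 p o) by (apply Rinv_0_lt_compat; auto). lra. Qed.

Lemma Phi_Psi : forall o p, p <> o -> Phi o (Psi o p) = p.
Proof. intros o p H. unfold Phi. rewrite Nq_Psi; auto. pose proof (dist2_pos p o H).
  destruct p as [p1 p2]; destruct o as [o1 o2]; unfold Psi; simpl. f_equal; field; lra. Qed.

Lemma dist2_Phi : forall o q, q <> (0,0) -> dist2 (Phi o q) o = / Nq q.
Proof. intros o q H. pose proof (Nq_pos q H). unfold dist2, Phi; simpl. unfold Nq in *. field. lra. Qed.

Lemma Psi_Phi : forall o q, q <> (0,0) -> Psi o (Phi o q) = q.
Proof. intros o q H. unfold Psi. rewrite dist2_Phi; auto. pose proof (Nq_pos q H).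
  destruct q as [q1 q2]; destruct o as [o1 o2]; unfold Phi; simpl. f_equal; field; lra. Qed.

Lemma Phi_ne : forall o q, q <> (0,0) -> Phi o q <> o.
Proof. intros o q H E. pose proof (dist2_Phi o q H). rewrite E in H0.
  unfold dist2 in H0. rewrite !Rminus_diag in H0. pose proof (Nq_pos q H).
  assert (0 < / Nq q) by (apply Rinv_0_lt_compat; auto). simpl in H0. lra. Qed.

Lemma h_Phi : forall o l q, q <> (0,0) -> hl l (Phi o q) = gl o l q / Nq q.
Proof. intros o [[a b] c] q H. pose proof (Nq_pos q H). unfold gl, Phi; simpl. field. lra. Qed.

Lemma g_Psi : forall o l p, p <> o -> gl o l (Psi o p) = hl l p / dist2 p o.
Proof. intros o [[a b] c] p H. unfold gl. rewrite Nq_Psi; auto. pose proof (dist2_pos p o H).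
  unfold Psi; simpl. field. lra. Qed.

Lemma g_zero : forall o l, gl o l (0,0) = 0.
Proof. intros o [[a b] c]. unfold gl, Nq; simpl. ring. Qed.

Lemma valid_pos : forall l, valid_line l -> let '(a, b, c) := l in 0 < a ^ 2 + b ^ 2.
Proof. intros [[a b] c] H. simpl in H. apply sum_sq_pos; auto. Qed.

Lemma on_circ : forall o l q, hl l o <> 0 -> valid_line l ->
  (on_circle (circ o l) q <-> gl o l q = 0).
Proof. intros o [[a b] c] q Hd Hv. pose proof (valid_pos _ Hv) as Hp. simpl in Hp.
  unfold on_circle, circ, gl.
  set (d := hl (a, b, c) o) in *. unfold dist2, Nq. cbn [fst snd].
  assert (R2 : (sqrt (a ^ 2 + b ^ 2) / (2 * Rabs d)) ^ 2 = (a^2 + b^2) / (4 * d^2)).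
  { unfold Rdiv. rewrite Rpow_mult_distr, pow2_sqrt by lra. rewrite pow_inv, Rpow_mult_distr, pow2_abs. field. auto. }
  rewrite R2.
  assert (E : (fst q - - a / (2 * d)) ^ 2 + (snd q - - b / (2 * d)) ^ 2 - (a^2 + b^2) / (4 * d^2)
             = (d * (fst q ^ 2 + snd q ^ 2) + a * fst q + b * snd q) / d) by (field; auto).
  split; intro H.
  - assert (X : (d * (fst q ^ 2 + snd q ^ 2) + a * fst q + b * snd q) / d = 0) by lra.
    unfold Rdiv in X. apply Rmult_integral in X. destruct X as [X|X]; auto.
    exfalso. apply Rinv_neq_0_compat in Hd. auto.
  - rewrite H in E. unfold Rdiv in E. rewrite Rmult_0_l in E. lra.
Qed.

Lemma circ_rad : forall o l, hl l o <> 0 -> valid_line l -> 0 < snd (circ o l).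
Proof. intros o [[a b] c] Hd Hv. pose proof (valid_pos _ Hv) as Hp. simpl in Hp.
  unfold circ. set (d := hl (a, b, c) o) in *. cbn [snd]. apply Rdiv_lt_0_compat. apply sqrt_lt_R0; auto.
  pose proof (Rabs_pos_lt _ Hd). lra. Qed.


Definition SC (n : nat) (L : nat -> line) (o : point) (q : point) : Prop :=
  ~ exists i, (i < n)%nat /\ on_circle (circ o (L i)) q.

Lemma cont2_gl : forall o l, cont2 (gl o l).
Proof. intros o [[a b] c].
  apply cont2_ext with (fun p => (fun _ => hl (a,b,c) o) p * (fst p * fst p + snd p * snd p) + ((fun _ => a) p * fst p + (fun _ => b) p * snd p)).
  intros; unfold gl, Nq; simpl; ring.
  apply cont2_plus. apply cont2_mult. apply cont2_const. apply cont2_plus; apply cont2_mult; (apply cont2_fst || apply cont2_snd).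
  apply cont2_plus; apply cont2_mult; (apply cont2_const || apply cont2_fst || apply cont2_snd). Qed.

Lemma cell_open : forall m (F : nat -> point -> R) o, (forall k, cont2 (F k)) ->
  (forall k, (k < m)%nat -> 0 < F k o) ->
  exists eps, 0 < eps /\ forall q, dist2 o q < eps ^ 2 -> forall k, (k < m)%nat -> 0 < F k q.
Proof. induction m; intros F o HF H.
  - exists 1. split. lra. intros; lia.
  - destruct (IHm F o HF) as [e1 [He1 H1]]. intros; apply H; lia.
    destruct (open_pos (F m) (HF m) o (H m ltac:(lia))) as [e2 [He2 H2]].
    exists (Rmin e1 e2). split. apply Rmin_glb_lt; auto.
    intros q Hq k Hk. destruct (min_sq e1 e2 _ He1 He2 Hq) as [Q1 Q2].
    destruct (Nat.eq_dec k m) as [->|]. apply H2; auto. apply H1; auto; lia. Qed.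

Section Inv.
Variable n : nat.
Variable L : nat -> line.
Variable o : point.
Hypothesis Hdd : forall k, (k < n)%nat -> hl (L k) o <> 0.
Hypothesis Hvv : forall k, (k < n)%nat -> valid_line (L k).

Lemma circ_line : forall i q, (i < n)%nat -> q <> (0,0) ->
  (on_circle (circ o (L i)) q <-> on_line (L i) (Phi o q)).
Proof. intros i q Hi Hq. rewrite on_circ, on_line_hl, h_Phi; auto.
  pose proof (Nq_pos q Hq) as HN. split; intro H.
  rewrite H. unfold Rdiv; ring.
  assert (E : gl o (L i) q = (gl o (L i) q / Nq q) * Nq q) by (field; lra). rewrite E, H. ring. Qed.

Lemma SC_nz : forall q, (0 < n)%nat -> SC n L o q -> q <> (0,0).
Proof. intros q Hn H E. apply H. exists 0%nat. split; auto. subst.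
  apply on_circ; auto. apply g_zero. Qed.

Lemma SC_iff : forall q, q <> (0,0) -> (SC n L o q <-> SL n L (Phi o q)).
Proof. intros q Hq. unfold SC, SL. split; intros H [i [Hi Hl]]; apply H; exists i; split; auto;
  apply (circ_line i q Hi Hq); auto. Qed.

Lemma SC_Psi : forall p, p <> o -> SL n L p -> SC n L o (Psi o p).
Proof. intros p Hp H. apply SC_iff. apply Psi_nz; auto. rewrite Phi_Psi; auto. Qed.

Lemma SC_gl : forall q i, SC n L o q -> (i < n)%nat -> gl o (L i) q <> 0.
Proof. intros q i H Hi E. apply H. exists i; split; auto. apply on_circ; auto. Qed.

Lemma seg_C : forall x y, (forall t, 0 <= t <= 1 -> seg x y t <> o) -> cell n L x y ->
  same_component (SC n L o) (Psi o x) (Psi o y).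
Proof. intros x y Hs Hc.
  exists (fun p => exists t, 0 <= t <= 1 /\ p = ((fun t => fst (Psi o (seg x y t))) t, (fun t => snd (Psi o (seg x y t))) t)).
  split; [|split; [|split]].
  - intros p [t [Ht ->]]. cbv beta. rewrite <- surjective_pairing.
    apply SC_Psi; auto. intros [i [Hi Hl]]. apply on_line_hl in Hl.
    specialize (sc_seg (L i) x y t (Hc i Hi) Ht). rewrite Hl. lra.
  - apply connected_path; intros t Ht; pose proof (dist2_pos _ _ (Hs t Ht)) as D;
    unfold Psi, seg, dist2 in *; cbn [fst snd] in *; reg; lra.
  - exists 0. split. lra. cbv beta. rewrite <- surjective_pairing, seg0. auto.
  - exists 1. split. lra. cbv beta. rewrite <- surjective_pairing, seg1. auto.
Qed.

End Inv.


Lemma alg1 : forall x1 x2 y1 y2 o1 o2 t0 d s, 0 < d -> 0 < (y1-x1)^2 + (y2-x2)^2 ->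
  x1 + t0 * (y1 - x1) = o1 -> x2 + t0 * (y2 - x2) = o2 ->
  x1 + s * ((o1 - d * (y2 - x2)) - x1) = o1 ->
  x2 + s * ((o2 + d * (y1 - x1)) - x2) = o2 -> x1 = o1 /\ x2 = o2.
Proof. intros x1 x2 y1 y2 o1 o2 t0 d s Hd Hv E1 E2 F1 F2.
  set (v1 := y1 - x1) in *. set (v2 := y2 - x2) in *.
  subst o1 o2.
  assert (e1 : s*(t0*v1 - d*v2) - t0*v1 = 0) by lra.
  assert (e2 : s*(t0*v2 + d*v1) - t0*v2 = 0) by lra.
  assert (e3 : s * d * (v1^2 + v2^2) = v1 * (s*(t0*v2 + d*v1) - t0*v2) - v2 * (s*(t0*v1 - d*v2) - t0*v1)) by ring.
  rewrite e1, e2 in e3. assert (s = 0).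
  { assert (s * (d * (v1^2+v2^2)) = 0) by lra. apply Rmult_integral in H. destruct H; auto.
    exfalso. assert (0 < d * (v1^2+v2^2)) by (apply Rmult_lt_0_compat; auto). lra. }
  subst s. assert (g1 : t0*v1 = 0) by lra. assert (g2 : t0*v2 = 0) by lra. assert (H : t0 * (v1^2+v2^2) = 0) by (replace (t0 * (v1^2+v2^2)) with (v1 * (t0*v1) + v2 * (t0*v2)) by ring; rewrite g1, g2; ring). apply Rmult_integral in H. destruct H as [H|H]. { subst t0. split; lra. } { exfalso; lra. }
Qed.

Lemma alg2 : forall x1 x2 y1 y2 o1 o2 t0 d s, 0 < d -> 0 < (y1-x1)^2 + (y2-x2)^2 ->
  x1 + t0 * (y1 - x1) = o1 -> x2 + t0 * (y2 - x2) = o2 ->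
  (o1 - d * (y2 - x2)) + s * (y1 - (o1 - d * (y2 - x2))) = o1 ->
  (o2 + d * (y1 - x1)) + s * (y2 - (o2 + d * (y1 - x1))) = o2 -> y1 = o1 /\ y2 = o2.
Proof. intros x1 x2 y1 y2 o1 o2 t0 d s Hd Hv E1 E2 F1 F2.
  assert (Y1 : y1 = o1 + (1 - t0) * (y1 - x1)) by lra.
  assert (Y2 : y2 = o2 + (1 - t0) * (y2 - x2)) by lra.
  set (v1 := y1 - x1) in *. set (v2 := y2 - x2) in *.
  assert (e1 : (1-s)*(-d*v2) + s*(1-t0)*v1 = 0).
  { rewrite Y1 in F1 at 1. lra. }
  assert (e2 : (1-s)*(d*v1) + s*(1-t0)*v2 = 0).
  { rewrite Y2 in F2 at 1. lra. }
  assert (e3 : (1-s) * d * (v1^2+v2^2) = v1 * ((1-s)*(d*v1) + s*(1-t0)*v2) - v2 * ((1-s)*(-d*v2) + s*(1-t0)*v1)) by ring.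
  rewrite e1, e2 in e3. assert (s = 1).
  { assert ((1-s) * (d * (v1^2+v2^2)) = 0) by lra. apply Rmult_integral in H. destruct H; [lra|].
    exfalso. assert (0 < d * (v1^2+v2^2)) by (apply Rmult_lt_0_compat; auto). lra. }
  subst s. assert ((1-t0) * (v1^2+v2^2) = v1 * ((1-1)*(d*v1) + 1*(1-t0)*v2*0 + 1*(1-t0)*v1) + v2 * ((1-1)*(-d*v2) + 1*(1-t0)*v2)) by ring. assert (g1 : (1-t0)*v1 = 0) by lra. assert (g2 : (1-t0)*v2 = 0) by lra. rewrite (Rmult_comm (1-t0) v1) in g1. clear H. assert (H : (1-t0) * (v1^2+v2^2) = 0) by (replace ((1-t0) * (v1^2+v2^2)) with (v1 * (v1*(1-t0)) + v2 * ((1-t0)*v2)) by ring; rewrite g1, g2; ring). apply Rmult_integral in H. destruct H.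
  split; nra. lra.
Qed.


Section Conn.
Variable n : nat.
Variable L : nat -> line.
Variable o : point.
Hypothesis Hdd : forall k, (k < n)%nat -> hl (L k) o <> 0.
Hypothesis Hvv : forall k, (k < n)%nat -> valid_line (L k).

Lemma conn_C : forall x y, cell n L x y -> x <> o -> y <> o ->
  same_component (SC n L o) (Psi o x) (Psi o y).
Proof. intros x y Hc Hx Hy.
  destruct (classic (exists t, 0 <= t <= 1 /\ seg x y t = o)) as [[t0 [Ht0 E0]] | NE].
  2: { apply seg_C; auto. intros t Ht E. apply NE. eauto. }
  assert (Ex1 : fst x + t0 * (fst y - fst x) = fst o) by (rewrite <- E0; reflexivity).
  assert (Ex2 : snd x + t0 * (snd y - snd x) = snd o) by (rewrite <- E0; reflexivity).
  set (v1 := fst y - fst x) in *. set (v2 := snd y - snd x) in *.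
  assert (Hv : 0 < v1^2 + v2^2).
  { apply sum_sq_pos. intros [h1 h2]. apply Hx. rewrite h1, h2 in *.
    destruct x as [x1 x2]; destruct o as [o1 o2]; simpl in *. f_equal; lra. }
  assert (Hxo : cell n L x o).
  { intros k Hk. rewrite <- E0. apply sc_seg; auto. }
  destruct (cell_open n (fun k q => hl (L k) x * hl (L k) q) o) as [eps [Heps Hop]].
  { intros k. apply cont2_mult. apply cont2_const. apply cont2_hl. }
  { exact Hxo. }
  set (A := Rabs v1 + Rabs v2 + 1).
  assert (HA : 0 < A) by (unfold A; pose proof (Rabs_pos v1); pose proof (Rabs_pos v2); lra).
  set (d := eps / (2 * A)).
  assert (Hd : 0 < d) by (apply Rdiv_lt_0_compat; lra).
  set (z := (fst o - d * v2, snd o + d * v1)).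
  assert (Hz : dist2 o z < eps ^ 2).
  { unfold dist2, z; simpl fst; simpl snd.
    assert (VA : v1^2 + v2^2 <= A^2).
    { unfold A. pose proof (Rabs_pos v1). pose proof (Rabs_pos v2).
      rewrite <- (pow2_abs v1), <- (pow2_abs v2). nra. }
    assert (dA : d * A = eps / 2) by (unfold d; field; lra).
    replace ((fst o - (fst o - d * v2)) ^ 2 + (snd o - (snd o + d * v1)) ^ 2) with (d^2 * (v1^2+v2^2)) by ring.
    apply Rle_lt_trans with (d^2 * A^2). apply Rmult_le_compat_l; auto. apply pow_le; lra.
    replace (d^2 * A^2) with ((d*A)^2) by ring. rewrite dA. nra. }
  assert (Hxz : cell n L x z) by (intros k Hk; apply (Hop z Hz k Hk)).
  assert (Hzy : cell n L z y).
  { intros k Hk. specialize (Hxz k Hk). specialize (Hc k Hk).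
    set (X := hl (L k) x) in *. set (Y := hl (L k) y) in *. set (Z := hl (L k) z) in *.
    assert (0 < X * X) by (destruct (Rtotal_order X 0) as [h|[h|h]]; [nra| rewrite h in Hc; lra | nra]).
    assert (0 < (X*X) * (Z * Y)) by (replace ((X*X)*(Z*Y)) with ((X*Z)*(X*Y)) by ring; apply Rmult_lt_0_compat; auto).
    destruct (Rle_lt_dec (Z*Y) 0); auto. nra. }
  apply same_comp_trans with (Psi o z).
  - apply seg_C; auto. intros s Hs E.
    assert (F1 : fst x + s * (fst z - fst x) = fst o) by (rewrite <- E; reflexivity).
    assert (F2 : snd x + s * (snd z - snd x) = snd o) by (rewrite <- E; reflexivity).
    unfold z in F1, F2; simpl fst in F1; simpl snd in F2.
    destruct (alg1 (fst x) (snd x) (fst y) (snd y) (fst o) (snd o) t0 d s Hd Hv Ex1 Ex2 F1 F2).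
    apply Hx. destruct x as [x1 x2]; destruct o as [o1 o2]; simpl in *. f_equal; auto.
  - apply seg_C; auto. intros s Hs E.
    assert (F1 : fst z + s * (fst y - fst z) = fst o) by (rewrite <- E; reflexivity).
    assert (F2 : snd z + s * (snd y - snd z) = snd o) by (rewrite <- E; reflexivity).
    unfold z in F1, F2; simpl fst in F1; simpl snd in F2.
    destruct (alg2 (fst x) (snd x) (fst y) (snd y) (fst o) (snd o) t0 d s Hd Hv Ex1 Ex2 F1 F2).
    apply Hy. destruct y as [y1 y2]; destruct o as [o1 o2]; simpl in *. f_equal; auto.
Qed.

End Conn.


Lemma avoid : forall m (v : nat -> R), exists y, forall k, (k < m)%nat -> v k < y.
Proof. induction m; intros v.
  - exists 0. intros; lia.
  - destruct (IHm v) as [y Hy]. exists (Rmax y (v m + 1)). intros k Hk.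
    destruct (Nat.eq_dec k m) as [->|].
    + eapply Rlt_le_trans; [|apply Rmax_r]. lra.
    + eapply Rlt_le_trans; [|apply Rmax_l]. apply Hy; lia. Qed.

Theorem lemma4 : forall n f : nat, (2 <= n)%nat -> L_set n f -> C_set n f.
Proof.
  intros n f Hn [L [Hval [Hdist [Hngp [r [Hr1 [Hr2 Hr3]]]]]]].
  destruct (avoid n (fun k => let '(a, b, c) := L k in c / a)) as [x0 Hx0].
  destruct (avoid n (fun k => let '(a, b, c) := L k in (c - a * x0) / b)) as [y1 Hy1].
  destruct (avoid f (fun i => snd (r i))) as [y2 Hy2].
  set (o := (x0, Rmax y1 y2)).
  assert (Hdd : forall k, (k < n)%nat -> hl (L k) o <> 0).
  { intros k Hk E. specialize (Hval k Hk). specialize (Hx0 k Hk). specialize (Hy1 k Hk).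
    pose proof (Rmax_l y1 y2). unfold o in E.
    destruct (L k) as [[a b] c]; simpl in *.
    destruct (Req_dec b 0) as [->|Hb].
    - assert (Ha : a <> 0) by tauto. assert (c / a = x0) by (field_simplify_eq; auto; lra). lra.
    - assert ((c - a * x0) / b = Rmax y1 y2) by (field_simplify_eq; auto; lra). lra. }
  assert (Hro : forall i, (i < f)%nat -> r i <> o).
  { intros i Hi E. specialize (Hy2 i Hi). rewrite E in Hy2. unfold o in Hy2; simpl in Hy2.
    pose proof (Rmax_r y1 y2). lra. }
  assert (Hon : forall k p, (k < n)%nat -> on_line (L k) p -> p <> o).
  { intros k p Hk Hp E. subst p. apply on_line_hl in Hp. apply (Hdd k Hk Hp). }
  assert (CL := circ_line n L o Hdd Hval).
  assert (Hz : forall k, (k < n)%nat -> on_circle (circ o (L k)) (0,0)).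
  { intros k Hk. apply on_circ; auto. apply g_zero. }
  exists (fun i => circ o (L i)).
  split; [|split; [|split; [|split]]].
  - intros i Hi. apply circ_rad; auto.
  - intros i j Hi Hj Hij E. apply (Hdist i j Hi Hj Hij). intro p.
    assert (T : forall k k', (k < n)%nat -> (k' < n)%nat -> circ o (L k) = circ o (L k') ->
              on_line (L k) p -> on_line (L k') p).
    { intros k k' Hk Hk' Ek Hp. assert (po := Hon k p Hk Hp).
      rewrite <- (Phi_Psi o p po). apply CL; auto. apply Psi_nz; auto. rewrite <- Ek.
      apply CL; auto. apply Psi_nz; auto. rewrite Phi_Psi; auto. }
    split; apply T; auto.
  - intros [Ht Htr]. apply Hngp. split.
    + intros i j Hi Hj Hij [Hns Hnp]. apply (Ht i j Hi Hj Hij). exists (0,0).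
      split; [apply Hz; auto|split; [apply Hz; auto|]].
      intros q Qi Qj. destruct (classic (q = (0,0))) as [|Hq]; auto. exfalso. apply Hnp.
      exists (Phi o q). split; [apply (CL i q Hi Hq) | apply (CL j q Hj Hq)]; auto.
    + intros i j k Hi Hj Hk Hij Hjk Hik [p [Pi [Pj Pk]]]. apply (Htr i j k Hi Hj Hk Hij Hjk Hik).
      assert (po := Hon i p Hi Pi). assert (qz := Psi_nz o p po).
      exists (Psi o p). split; [|split]; apply CL; auto; rewrite Phi_Psi; auto.
  - intros i j Hi Hj. exists (0,0). split; apply Hz; auto.
  - change (num_components (SC n L o) f).
    exists (fun i => Psi o (r i)). split; [|split].
    + intros i Hi. apply (SC_Psi n L o Hdd Hval). apply Hro; auto. apply Hr1; auto.
    + intros i j Hi Hj Hij Hs. apply (Hr2 i j Hi Hj Hij). apply SL_conn. intros k Hk.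
      pose proof (sep_gen _ (gl o (L k)) _ _ (cont2_gl o (L k))
                    (fun q Hq => SC_gl n L o Hdd Hval q k Hq Hk) Hs) as H.
      rewrite !g_Psi in H by auto.
      pose proof (dist2_pos _ _ (Hro i Hi)) as D1. pose proof (dist2_pos _ _ (Hro j Hj)) as D2.
      replace (hl (L k) (r i) * hl (L k) (r j)) with
        ((hl (L k) (r i) / dist2 (r i) o * (hl (L k) (r j) / dist2 (r j) o)) * (dist2 (r i) o * dist2 (r j) o)) by (field; lra).
      apply Rmult_lt_0_compat; auto. apply Rmult_lt_0_compat; auto.
    + intros p Hp. assert (pz : p <> (0,0)) by (apply (SC_nz n L o Hdd Hval); auto; lia).
      assert (HS : SL n L (Phi o p)) by (apply (SC_iff n L o Hdd Hval); auto).
      destruct (Hr3 _ HS) as [i [Hi Hs]]. exists i. split; auto.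
      rewrite <- (Psi_Phi o p pz). apply conn_C; auto. apply SL_sep; auto. apply Phi_ne; auto.
Qed.
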